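(* Let $(X,T)$ be a minimal system and $d\ge2$. Then there is a dense $G_\delta$ subset $X_0\subset X$ such that for every $x\in X_0$, $\{(x_1,\dots,x_d)\in N_d(X):x_1=x\}=\{x\}\times L_x$, where $L_x=\overline{\{(T^nx,T^{2n}x,\dots,T^{(d-1)n}x):n\in\mathbb{Z}\}}$ is the orbit closure of $(x,\dots,x)\in X^{d-1}$ under $T\times T^2\times\cdots\times T^{d-1}$.
   Context: $N_d(X)=\overline{\{(T^{p+q}x,\dots,T^{p+dq}x):x\in X,p,q\in\mathbb{Z}\}}\subset X^d$. *)

(* Defs.v *)
From HB Require Import structures.
From mathcomp Require Import all_boot all_order all_algebra.
From mathcomp Require Import all_classical all_reals all_analysis.
Set Implicit Arguments. Unset Strict Implicit. Unset Printing Implicit Defensive.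
Import Order.TTheory GRing.Theory Num.Theory.
Local Open Scope classical_set_scope.
Local Open Scope ring_scope.

Section Defs.
Context {X : Type}.

(* T^n for n : int, where Ti is the inverse of T *)
Definition iterz (T Ti : X -> X) (n : int) : X -> X :=
  match n with Posz k => iter k T | Negz k => iter k.+1 Ti end.

Definition orbitz (T Ti : X -> X) (x : X) : set X :=
  [set y | exists n : int, y = iterz T Ti n x].
End Defs.

Definition tds {R : realType} (X : metricType R) (T Ti : X -> X) : Prop :=
  [/\ compact [set: X], continuous T, continuous Ti,
      cancel T Ti & cancel Ti T].

Definition minimal_sys {R : realType} (X : metricType R) (T Ti : X -> X) : Prop :=
  tds T Ti /\ forall x : X, closure (orbitz T Ti x) = [set: X].

Definition dense_Gdelta (Y : topologicalType) (A : set Y) : Prop :=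
  dense A /\ exists U : nat -> set Y,
    (forall n, open (U n)) /\ A = \bigcap_n U n.

(* N_d(X) = closure {(T^{p+q}x, T^{p+2q}x, ..., T^{p+dq}x)} in X^d,
   coordinate i : 'I_d being T^{p+(i+1)q} x; product topology on X^d *)
Definition Nd {R : realType} (X : metricType R) (T Ti : X -> X) (d : nat)
  : set {ptws 'I_d -> X} :=
  closure [set z : {ptws 'I_d -> X} | exists (x : X) (p q : int),
     z = (fun i : 'I_d => iterz T Ti (p + (i.+1)%:Z * q) x)].

(* L_x = closure {(T^n x, T^{2n} x, ..., T^{(d-1)n} x) : n in Z} in X^(d-1),
   coordinate j : 'I_(d.-1) being T^{(j+1)n} x *)
Definition Lx {R : realType} (X : metricType R) (T Ti : X -> X) (d : nat) (x : X)
  : set {ptws 'I_d.-1 -> X} :=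
  closure [set w : {ptws 'I_d.-1 -> X} | exists n : int,
     w = (fun j : 'I_d.-1 => iterz T Ti ((j.+1)%:Z * n) x)].

Lemma tail_ord_proof d (j : 'I_d.-1) : (j.+1 < d)%N.
Proof. by rewrite -ltn_predRL ltn_ord. Qed.

Definition tailf {X : Type} d (z : 'I_d -> X) : 'I_d.-1 -> X :=
  fun j => z (Ordinal (tail_ord_proof j)).

Arguments Nd {R X} T Ti d _.
Arguments Lx {R X} T Ti d x _.
Arguments tailf {X d} z _.

(* Main.v *)
Require Import Defs.
From HB Require Import structures.
From mathcomp Require Import all_boot all_order all_algebra.
From mathcomp Require Import all_classical all_reals all_analysis.
From mathcomp Require Import zify ring lra.
Import Order.TTheory GRing.Theory Num.Theory.
Local Open Scope classical_set_scope.
Local Open Scope ring_scope.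

Lemma iterzS {X : Type} (T Ti : X -> X) : cancel T Ti -> cancel Ti T ->
  forall (n : int) y, iterz T Ti (n + 1) y = T (iterz T Ti n y).
Proof.
move=> c1 c2 [k|k] y /=.
  by rewrite addn1 iterS.
case: k => [|k]; first by rewrite /= c2.
have -> : Negz k.+1 + 1 = Negz k by rewrite !NegzE; lia.
by rewrite /= c2.
Qed.

Lemma iterzP {X : Type} (T Ti : X -> X) : cancel T Ti -> cancel Ti T ->
  forall (n : int) y, iterz T Ti (n - 1) y = Ti (iterz T Ti n y).
Proof.
move=> c1 c2 n y.
have := @iterzS X T Ti c1 c2 (n - 1) y; rewrite subrK => ->; by rewrite c1.
Qed.

Lemma iterzD {X : Type} (T Ti : X -> X) : cancel T Ti -> cancel Ti T ->
  forall (a b : int) y, iterz T Ti (a + b) y = iterz T Ti a (iterz T Ti b y).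
Proof.
move=> c1 c2 [k|k] b y.
  elim: k => [|k IH]; first by rewrite add0r.
  have -> : Posz k.+1 + b = (Posz k + b) + 1 by lia.
  by rewrite iterzS // IH.
elim: k => [|k IH].
  have -> : Negz 0 + b = b - 1 by rewrite NegzE; lia.
  by rewrite iterzP.
have -> : Negz k.+1 + b = (Negz k + b) - 1 by rewrite !NegzE; lia.
by rewrite iterzP // IH.
Qed.

Lemma iterz0 {X : Type} (T Ti : X -> X) y : iterz T Ti 0 y = y.
Proof. by []. Qed.

Lemma iterz_cont {R : realType} (X : metricType R) (T Ti : X -> X) :
  continuous T -> continuous Ti -> forall n : int, continuous (iterz T Ti n).
Proof.
move=> cT cTi [k|k] /=.
  elim: k => [|k IH] x /=; first exact: cvg_id.
  exact: (continuous_comp (IH x) (cT _)).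
elim: k => [|k IH] x /=; first exact: cTi.
exact: (continuous_comp (IH x) (cTi _)).
Qed.

Lemma ptws_box_sub {R : realType} {X : metricType R} n (f : {ptws 'I_n -> X})
  (B : set {ptws 'I_n -> X}) : nbhs f B ->
  exists2 e : R, 0 < e & [set g : {ptws 'I_n -> X} | forall i, ball (f i) e (g i)] `<=` B.
Proof.
pose F := filter_from [set e : R | 0 < e]
  (fun e => [set g : {ptws 'I_n -> X} | forall i, ball (f i) e (g i)]).
have FF : Filter F.
  apply: filter_from_filter; first by exists 1; rewrite /= ltr01.
  move=> i j /= i0 j0; exists (Num.min i j); first by rewrite lt_min i0 j0.
  move=> g /= Hg; split => t; apply: (le_ball _ (Hg t)); 
    by rewrite ge_min lexx ?orbT.
have : F --> f.
  apply/cvg_sup => i A /=.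
  move=> [C [oC Cf] CA].
  case: oC => D oD DC.
  have : nbhs (f i) D by apply: open_nbhs_nbhs; split => //; rewrite -DC in Cf.
  move=> /nbhs_ballP [eps eps0 epsD].
  rewrite nbhs_filterE; exists eps => // g /= Hg.
  apply: CA; rewrite -DC; exact: epsD (Hg i).
by move=> /(_ B) /= H /H [e e0 He]; exists e.
Qed.

Lemma ptws_box_nbhs {R : realType} {X : metricType R} n (f : {ptws 'I_n -> X})
  (e : 'I_n -> R) : (forall i, 0 < e i) ->
  nbhs f [set g : {ptws 'I_n -> X} | forall i, ball (f i) (e i) (g i)].
Proof.
move=> e0.
have H : forall i, nbhs f [set g : {ptws 'I_n -> X} | ball (f i) (e i) (g i)].
  move=> i; have := @proj_continuous 'I_n (fun _ => X) i f.
  by move=> /(_ _ (nbhsx_ballx (f i) _ (e0 i))).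
exact: (@filter_forall _ _ _ _ _ H).
Qed.

Lemma ball_open_m {R : realType} {X : metricType R} (c : X) (r : R) : open (ball c r).
Proof.
rewrite openE => y; rewrite /interior ballEmdist /= => cy.
apply/nbhs_ballP; exists (r - mdist c y); first by rewrite /= subr_gt0.
move=> u; rewrite /= ballEmdist /= => yu.
apply: (le_lt_trans (metric_triangle c y u)); by rewrite -ltrBrDl.
Qed.

Lemma finite_cover {R : realType} {X : metricType R} (r : R) :
  compact [set: X] -> 0 < r -> exists s : seq X, forall y, exists2 c, c \in s & ball c r y.
Proof.
move=> cpt r0; apply: contrapT => Hn.
pose G := filter_from [set: seq X]
  (fun s => [set y : X | forall c, c \in s -> ~ ball c r y]).
have FG : Filter G.
  apply: filter_from_filter; first by exists [::].
  move=> s t _ _; exists (s ++ t) => // y /= Hy; split => c cs.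
    by apply: Hy; rewrite mem_cat cs.
  by apply: Hy; rewrite mem_cat cs orbT.
have PG : ProperFilter G.
  apply: filter_from_proper => s _.
  apply: contrapT => Hs; apply: Hn; exists s => y.
  apply: contrapT => Hy; apply: Hs; exists y => c cs cy; apply: Hy; by exists c.
have [p [_ clp]] := cpt G PG (filterT).
have := clp [set y : X | forall c, c \in [:: p] -> ~ ball c r y] (ball p r).
case.
- by exists [:: p].
- exact: nbhsx_ballx.
move=> y [/= H py]; apply: (H p) => //; by rewrite inE.
Qed.

Lemma baire_compact {R : realType} {X : metricType R} (U : nat -> set X) :
  compact [set: X] -> (forall n, open (U n)) -> (forall n, dense (U n)) ->
  dense (\bigcap_n U n).
Proof.
move=> cpt oU dU O [a Oa] oO.
have step : forall p : nat * (X * R), exists yr : X * R, 0 < p.2.2 ->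
    0 < yr.2 /\ ball yr.1 (yr.2 + yr.2) `<=` ball p.2.1 p.2.2 `&` U p.1.
  move=> [n [x r]] /=; have [r0|r0] := pselect (0 < r); last first.
    by exists (x, r).
  have [y [xy Uy]] := dU n (ball x r) (ex_intro _ x (ballxx x r0)) (ball_open_m x r).
  have : nbhs y (ball x r `&` U n).
    by apply: open_nbhs_nbhs; split => //; apply: openI => //; exact: ball_open_m.
  move=> /nbhs_ballP [eps /= eps0 Heps]; exists (y, eps / 2) => _ /=.
  by split; [rewrite divr_gt0 | rewrite -splitr].
have [f Hf] := choice step.
have : nbhs a O by apply: open_nbhs_nbhs.
move=> /nbhs_ballP [eps /= eps0 HepsO].
pose s := fix s n := match n with 0%N => (a, eps / 2) | m.+1 => f (m, s m) end.
have pos : forall n, 0 < (s n).2.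
  by elim=> [|n IH] /=; [rewrite divr_gt0 | exact: (Hf (n, s n) IH).1].
have sub : forall n, ball (s n.+1).1 ((s n.+1).2 + (s n.+1).2) `<=` ball (s n).1 (s n).2 `&` U n.
  by move=> n; exact: (Hf (n, s n) (pos n)).2.
have sub1 : forall n, ball (s n.+1).1 (s n.+1).2 `<=` ball (s n).1 (s n).2.
  move=> n y Hy.
  have H2 : ball (s n.+1).1 ((s n.+1).2 + (s n.+1).2) y.
    by apply: le_ball Hy; rewrite lerDl ltW.
  by case: (sub n y H2).
have nest : forall n m, (n <= m)%N -> ball (s m).1 (s m).2 `<=` ball (s n).1 (s n).2.
  move=> n; elim=> [|m IH]; first by rewrite leqn0 => /eqP ->.
  rewrite leq_eqVlt => /orP [/eqP -> //|]; rewrite ltnS => nm.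
  by move=> y /sub1 /(IH nm).
pose x := fun n => (s n).1.
have [p [_ clp]] := cpt (x @ \oo) _ filterT.
have Hp : forall n, ball (s n.+1).1 ((s n.+1).2 + (s n.+1).2) p.
  move=> n.
  have := clp (ball (s n.+1).1 (s n.+1).2) (ball p (s n.+1).2).
  case.
  - exists n.+1 => // m /= nm; apply: (nest _ _ nm); exact: ballxx.
  - exact: nbhsx_ballx.
  move=> y [c1 c2]; apply: ball_triangle c1 _; exact: ball_sym.
exists p; split.
  apply: HepsO; have := (sub 0%N p (Hp 0%N)).1; rewrite /=.
  apply: le_ball; rewrite ler_pdivrMr // ler_peMr ?ltW //.
  by rewrite ltr1n.
by move=> n _; exact: (sub n p (Hp n)).2.
Qed.

Lemma fin_open_dense {T : topologicalType} (I : finType) (C : I -> set T) :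
  (forall i, open (C i)) -> (forall i, dense (C i)) ->
  open [set y | forall i, C i y] /\ dense [set y | forall i, C i y].
Proof.
move=> oC dC.
suff H : forall l : seq I, open [set y | forall i, i \in l -> C i y] /\
                           dense [set y | forall i, i \in l -> C i y].
  have -> : [set y | forall i, C i y] = [set y | forall i, i \in enum I -> C i y].
    by apply/seteqP; split => y /= Hy i; [move=> _|]; apply: Hy; rewrite ?mem_enum.
  exact: H.
elim=> [|i l [IHo IHd]].
  have -> : [set y : T | forall i, i \in [::] -> C i y] = setT.
    by apply/seteqP; split => y //= _ i; rewrite in_nil.
  split; first exact: openT.
  by move=> O [a Oa] _; exists a.
have -> : [set y | forall j, j \in i :: l -> C j y] =
          C i `&` [set y | forall j, j \in l -> C j y].
  apply/seteqP; split => y /=.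
    by move=> H; split; [apply: H; rewrite inE eqxx | move=> j jl; apply: H; rewrite inE jl orbT].
  by move=> [Ci H] j; rewrite inE => /orP [/eqP -> //|]; exact: H.
split; first exact: openI.
exact: denseI.
Qed.

Lemma CV_open_dense {T : topologicalType} (O : set T) : open O ->
  open (O `|` ~` closure O) /\ dense (O `|` ~` closure O).
Proof.
move=> oO; split.
  apply: openU => //; apply: closed_openC; exact: closed_closure.
move=> W [a Wa] oW.
have [[b [Wb Ob]]|nWO] := pselect (W `&` O !=set0).
  by exists b; split => //; left.
exists a; split => //; right => cla.
have [b [Ob Wb]] := cla W (open_nbhs_nbhs (conj oW Wa)).
by apply: nWO; exists b.
Qed.

Lemma OV_open {R : realType} {X : metricType R} (T Ti : X -> X) k (c : 'I_k -> X) (r : R) :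
  continuous T -> continuous Ti ->
  open [set y : X | exists n : int, forall j : 'I_k, ball (c j) r (iterz T Ti ((j.+1)%:Z * n) y)].
Proof.
move=> cT cTi; rewrite openE => y [n Hn].
have H : forall j : 'I_k, \forall y' \near y, ball (c j) r (iterz T Ti ((j.+1)%:Z * n) y').
  move=> j; have Hc := @iterz_cont _ _ T Ti cT cTi ((j.+1)%:Z * n) y.
  have H' : nbhs (iterz T Ti ((j.+1)%:Z * n) y) (ball (c j) r).
    by apply: open_nbhs_nbhs; split; [exact: ball_open_m | exact: Hn].
  exact: (Hc _ H').
apply: (filterS _ (@filter_forall _ _ _ _ _ H)) => y' Hy'; by exists n.
Qed.

Theorem lemma4p4 (R : realType) (X : metricType R) (T Ti : X -> X)
    (d : nat) :
  minimal_sys T Ti -> (2 <= d)%N ->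
  exists X0 : set X, dense_Gdelta X0 /\
    forall x : X, X0 x ->
      [set z : {ptws 'I_d -> X} | Nd T Ti d z /\ forall i : 'I_d, val i = 0%N -> z i = x]
      = [set z : {ptws 'I_d -> X} | (forall i : 'I_d, val i = 0%N -> z i = x) /\
                                     Lx T Ti d x (tailf z)].
Proof.
move=> [[cpt cT cTi c1 c2] _] d2.
have [[x0 _]|nX] := pselect (exists x0 : X, True); last first.
  exists setT; split.
    split; first by move=> O [a _]; exfalso; apply: nX; by exists a.
    by exists (fun=> setT); split => [n|]; [exact: openT | apply/seteqP; split => y //].
  by move=> x; exfalso; apply: nX; exists x.
pose rad (m : nat) : R := (m.+1%:R)^-1.
have rad0 : forall m, 0 < rad m by move=> m; rewrite /rad invr_gt0 ltr0n.
have [S HS] := @choice nat (seq X)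
  (fun m s => forall y, exists2 c, c \in s & ball c (rad m) y)
  (fun m => @finite_cover R X (rad m) cpt (rad0 m)).
pose OV (c : 'I_d.-1 -> X) (r : R) := [set y : X | exists n : int,
  forall j : 'I_d.-1, ball (c j) r (iterz T Ti ((j.+1)%:Z * n) y)].
pose CV c r := OV c r `|` ~` closure (OV c r).
pose U (m : nat) := [set y : X | forall cf : {ffun 'I_d.-1 -> 'I_(size (S m))},
  CV (fun j => nth x0 (S m) (cf j)) (rad m) y].
have oU : forall m, open (U m) /\ dense (U m).
  move=> m; apply: (@fin_open_dense _ _ (fun cf : {ffun 'I_d.-1 -> 'I_(size (S m))} =>
     CV (fun j => nth x0 (S m) (cf j)) (rad m))) => cf.
    by have [] := CV_open_dense _ (@OV_open R X T Ti d.-1 (fun j => nth x0 (S m) (cf j)) (rad m) cT cTi).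
  by have [] := CV_open_dense _ (@OV_open R X T Ti d.-1 (fun j => nth x0 (S m) (cf j)) (rad m) cT cTi).
exists (\bigcap_m U m); split.
  split.
    by apply: baire_compact => // m; case: (oU m).
  by exists U; split => // m; case: (oU m).
move=> x X0x.
have d0 : (0 < d)%N by apply: leq_trans d2.
pose i0 : 'I_d := Ordinal d0.
apply/seteqP; split => z /=.
- move=> [Nz z0]; split => //.
  apply: contrapT => nL.
  have [B [nB SB]] : exists B, nbhs (tailf z : {ptws 'I_d.-1 -> X}) B /\
      forall w, B w -> ~ (exists n : int, w = (fun j : 'I_d.-1 => iterz T Ti ((j.+1)%:Z * n) x)).
    move: nL; rewrite /Lx /closure /= => /existsNP [B /not_implyP [nB HB]].
    exists B; split => // w Bw Sw; apply: HB; by exists w.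
  have [e e0 He] := ptws_box_sub _ _ _ nB.
  have e20 : 0 < e / 2 by rewrite divr_gt0.
  have [m _ /(_ m (leqnn _)) Hm] := near_infty_natSinv_lt (PosNum e20).
  have [g Hg] : {g : 'I_d.-1 -> 'I_(size (S m)) &
      forall j, ball (nth x0 (S m) (g j)) (rad m) (tailf z j)}.
    apply: (@choice _ _ (fun j (i : 'I_(size (S m))) => ball (nth x0 (S m) i) (rad m) (tailf z j))).
    move=> j; have [c cS cb] := HS m (tailf z j).
    have ic : (index c (S m) < size (S m))%N by rewrite index_mem.
    by exists (Ordinal ic); rewrite /= nth_index.
  pose cf := [ffun j => g j].
  pose c := fun j => nth x0 (S m) (cf j).
  have Hc : forall j, ball (c j) (rad m) (tailf z j) by move=> j; rewrite /c ffunE.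
  have VB : forall w : {ptws 'I_d.-1 -> X}, (forall j, ball (c j) (rad m) (w j)) -> B w.
    move=> w Hw; apply: He => j.
    have := ball_triangle (ball_sym (Hc j)) (Hw j).
    apply: le_ball; move: Hm; rewrite /= -/(rad m) => Hm; lra.
  have := X0x m I cf; case => [[n Hn]| ncl].
    apply: (SB (fun j => iterz T Ti ((j.+1)%:Z * n) x)); last by exists n.
    by apply: VB => j; exact: Hn j.
  apply: ncl => W nW.
  move/nbhs_ballP: nW => [del del0 Hdel].
  have nZ : nbhs (z : {ptws 'I_d -> X}) [set z' : {ptws 'I_d -> X} |
      ball x del (z' i0) /\ forall j : 'I_d.-1, ball (c j) (rad m) (tailf z' j)].
    apply: filterI.
      have := @proj_continuous 'I_d (fun _ => X) i0 z.
      move=> /(_ _ (nbhsx_ballx (z i0) _ del0)).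
      by rewrite /= (z0 i0 erefl).
    have H : forall j : 'I_d.-1, nbhs (z : {ptws 'I_d -> X})
        [set z' : {ptws 'I_d -> X} | ball (c j) (rad m) (tailf z' j)].
      move=> j; have := @proj_continuous 'I_d (fun _ => X) (Ordinal (tail_ord_proof j)) z.
      apply; apply: open_nbhs_nbhs; split; [exact: ball_open_m | exact: Hc j].
    exact: (@filter_forall _ _ _ _ _ H).
  have [z' [[y [p [q Ez']]] [Z1 Z2]]] := Nz _ nZ.
  exists (iterz T Ti (p + q) y); split.
    exists q => j; have := Z2 j; rewrite /tailf Ez' /= -iterzD //.
    have -> : (j.+1)%:Z * q + (p + q) = p + (j.+2)%:Z * q.
      have -> : (j.+2)%:Z = (j.+1)%:Z + 1 by lia.
      ring.
    by [].
  apply: Hdel; move: Z1; rewrite Ez' /=.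
  have -> : p + (1%N%:Z) * q = p + q by rewrite mul1r.
  by [].
- move=> [z0 Lz]; split => //.
  rewrite /Nd => B nB.
  have [e e0 He] := ptws_box_sub _ _ _ nB.
  have nT := ptws_box_nbhs _ (tailf z : {ptws 'I_d.-1 -> X}) (fun=> e) (fun=> e0).
  have [w [[n Ew] Hw]] := Lz _ nT.
  exists (fun i : 'I_d => iterz T Ti (- n + (i.+1)%:Z * n) x); split.
    by exists x, (- n), n.
  apply: He => i.
  case: i => [[|j] ij] /=.
    have -> : - n + (1%N%:Z) * n = 0 by rewrite mul1r addNr.
    rewrite iterz0 (z0 (Ordinal ij) erefl); exact: ballxx.
  have jk : (j < d.-1)%N by rewrite -ltnS prednK.
  have := Hw (Ordinal jk); rewrite Ew /tailf /=.
  have -> : Ordinal (tail_ord_proof (Ordinal jk)) = Ordinal ij by apply: val_inj.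
  have -> : - n + (j.+2)%:Z * n = (j.+1)%:Z * n.
    have -> : (j.+2)%:Z = (j.+1)%:Z + 1 by lia.
    ring.
  by [].
Qed.
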